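(* Let $G$ be a bipartite simple graph with stable sets $X=\{x_i\}_{i=1}^s$ and $Y=\{y_j\}_{j=1}^t$, and suppose $G\cong H_1\oplus H_2$ is a decomposition of $G$. If $G$ is edge-magic (respectively, super edge-magic), then $S_2(G;H_1,H_2)$ is edge-magic (respectively, super edge-magic).
   Context: For a $(p,q)$-graph $G$ ($p$ vertices, $q$ edges), an edge-magic labeling is a bijection $f:V(G)\cup E(G)\to[1,p+q]$ such that $f(x)+f(xy)+f(y)$ is constant for every edge $xy$; it is super edge-magic if moreover $f(V(G))=[1,p]$. A decomposition $G\cong H_1\oplus H_2$ means $H_1,H_2$ are subgraphs of $G$ whose edge sets partition $E(G)$. $S_2(G;H_1,H_2)$ is the graph with vertex set $X\cup Y\cup X'\cup Y'$, where $X'=\{x_i'\}_{i=1}^s$ and $Y'=\{y_j'\}_{j=1}^t$ are new vertices, and edge set $E(G)\cup\{x_iy_j' : x_iy_j\in E(H_1)\}\cup\{x_i'y_j : x_iy_j\in E(H_2)\}$. *)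

(* Defs.v *)
From mathcomp Require Import all_boot.
Set Implicit Arguments. Unset Strict Implicit. Unset Printing Implicit Defensive.

(* A simple graph is a finite vertex type V with a symmetric irreflexive
   adjacency relation r.  Its edge set consists of the 2-subsets {x,y}. *)
Definition edges (V : finType) (r : rel V) : {set {set V}} :=
  [set e : {set V} | [exists x : V, exists y : V, r x y && (e == [set x; y])]].

(* (f, g) is an edge-magic labeling of the (p,q)-graph (V, r):
   the combined labeling of V ∪ E(G) (vertices by f, edges by g) is a
   bijection onto [1, p+q], and f x + g {x,y} + f y is constant on edges. *)
Definition edge_magic_labeling (V : finType) (r : rel V)
    (f : V -> nat) (g : {set V} -> nat) : Prop :=
  let p := #|V| in let q := #|edges r| in
  [/\
      (injective f /\
      {in edges r &, injective g} /\
      (forall v e, e \in edges r -> f v <> g e)),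
      (forall v, 1 <= f v <= p + q),
      (forall e, e \in edges r -> 1 <= g e <= p + q),
      (forall k, 1 <= k <= p + q ->
         (exists v, f v = k) \/ (exists2 e, e \in edges r & g e = k)) &
      (exists c, forall x y, r x y -> f x + g [set x; y] + f y = c)].

Definition edge_magic (V : finType) (r : rel V) : Prop :=
  exists f g, edge_magic_labeling r f g.

Definition super_edge_magic (V : finType) (r : rel V) : Prop :=
  exists f g, [/\ edge_magic_labeling r f g,
                  (forall v, 1 <= f v <= #|V|) &
                  (forall k, 1 <= k <= #|V| -> exists v, f v = k)].

(* Bipartite graph with stable sets X = {x_i : i < s} (inl i) and
   Y = {y_j : j < t} (inr j); b i j means x_i y_j is an edge. *)
Definition bip_rel (s t : nat) (b : 'I_s -> 'I_t -> bool) : rel ('I_s + 'I_t) :=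
  fun u v => match u, v with
  | inl i, inr j => b i j
  | inr j, inl i => b i j
  | _, _ => false
  end.

Definition decomposition (s t : nat) (b h1 h2 : 'I_s -> 'I_t -> bool) : Prop :=
  forall i j, (b i j = h1 i j || h2 i j) /\ ~~ (h1 i j && h2 i j).

(* S_2(G; H1, H2): vertices inl u are the original X ∪ Y, vertices
   inr (inl i) = x_i', inr (inr j) = y_j'. *)
Definition S2_rel (s t : nat) (b h1 h2 : 'I_s -> 'I_t -> bool)
    : rel (('I_s + 'I_t) + ('I_s + 'I_t)) :=
  fun u v => match u, v with
  | inl u', inl v' => bip_rel b u' v'
  | inl (inl i), inr (inr j) => h1 i j          (* x_i y_j' *)
  | inr (inr j), inl (inl i) => h1 i j
  | inr (inl i), inl (inr j) => h2 i j          (* x_i' y_j *)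
  | inl (inr j), inr (inl i) => h2 i j
  | _, _ => false
  end.

(* Main.v *)
Require Import Defs.
From mathcomp Require Import all_boot.
From mathcomp Require Import zify.
Set Bullet Behavior "Strict Subproofs".

Section Gen.
Variables (V : finType) (r : rel V) (f : V -> nat) (g : {set V} -> nat) (M : nat).

Lemma gen_label :
  injective f ->
  {in edges r &, injective g} ->
  (forall v e, e \in edges r -> f v <> g e) ->
  (forall v, 1 <= f v <= M) ->
  (forall e, e \in edges r -> 1 <= g e <= M) ->
  (forall k, 1 <= k <= M ->
     (exists v, f v = k) \/ (exists2 e, e \in edges r & g e = k)) ->
  (exists c, forall x y, r x y -> f x + g [set x; y] + f y = c) ->
  M = #|V| + #|edges r| /\ edge_magic_labeling r f g.
Proof.
move=> fI gI dj fb gb su mc.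
have HM : M = #|V| + #|edges r|.
  pose s1 := map f (enum V) ++ map g (enum (edges r)).
  have us : uniq s1.
    rewrite cat_uniq (map_inj_uniq fI) enum_uniq /=.
    rewrite map_inj_in_uniq ?enum_uniq; last first.
      by move=> a c; rewrite !mem_enum; apply: gI.
    rewrite andbT; apply/hasPn => z /mapP [e]; rewrite mem_enum => he ->.
    apply/negP => /mapP [v _ /esym]; exact: dj.
  have ps : perm_eq s1 (iota 1 M).
    apply: uniq_perm => //; first exact: iota_uniq.
    move=> z; rewrite mem_iota mem_cat; apply/idP/idP.
      case/orP => /mapP.
        by case=> v _ ->; move: (fb v); lia.
      by case=> e; rewrite mem_enum => he ->; move: (gb e he); lia.
    move=> hz.
    have hz' : 1 <= z <= M by lia.
    case: (su z hz') => [[v <-]|[e he <-]].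
      by rewrite map_f ?mem_enum.
    by rewrite orbC map_f ?mem_enum.
  rewrite -(size_iota 1 M) -(perm_size ps) size_cat !size_map; congr (_ + _); [by rewrite cardT enumT | by rewrite cardE].
split=> //; split; rewrite -?HM //.
Qed.
End Gen.

Section S2.
Variables (s t : nat) (b h1 h2 : 'I_s -> 'I_t -> bool).
Hypothesis dec : decomposition b h1 h2.
Local Notation V := ('I_s + 'I_t)%type.
Local Notation V2 := (V + V)%type.

Definition isl (v : V2) : bool := if v is inl _ then true else false.
Definition unw (v : V2) : V := match v with inl u => u | inr u => u end.
Definition proj (e : {set V2}) : {set V} := [set w | (inl w \in e) || (inr w \in e)].
Definition cl (e : {set V2}) : bool := [forall w, (w \in e) ==> isl w].
Definition FF (f : V -> nat) (v : V2) : nat :=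
  if isl v then 2 * f (unw v) else 2 * f (unw v) - 1.
Definition GG (g : {set V} -> nat) (e : {set V2}) : nat :=
  if cl e then 2 * g (proj e) - 1 else 2 * g (proj e).

Lemma proj2 x y : proj [set x; y] = [set unw x; unw y].
Proof.
apply/setP => w; rewrite !inE.
by case: x => x; case: y => y /=; rewrite ?orbF ?orFb ?(inj_eq inl_inj) ?(inj_eq inr_inj) // orbC.
Qed.

Lemma cl2 x y : cl [set x; y] = isl x && isl y.
Proof.
apply/idP/idP.
  move/forallP => H.
  by rewrite (implyP (H x) (set21 _ _)) (implyP (H y) (set22 _ _)).
case/andP => hx hy; apply/forallP => w; apply/implyP.
by rewrite !inE => /orP [/eqP -> | /eqP ->].
Qed.

Lemma GG2 g x y : GG g [set x; y] =
  if isl x && isl y then 2 * g [set unw x; unw y] - 1 else 2 * g [set unw x; unw y].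
Proof. by rewrite /GG cl2 proj2. Qed.

Lemma S2_bip x y : S2_rel b h1 h2 x y -> bip_rel b (unw x) (unw y) /\ (isl x || isl y).
Proof.
have H1 i j : h1 i j -> b i j by move=> h; rewrite (proj1 (dec i j)) h.
have H2 i j : h2 i j -> b i j by move=> h; rewrite (proj1 (dec i j)) h orbT.
by case: x => [[i|j]|[i|j]]; case: y => [[i'|j']|[i'|j']] //=; auto.
Qed.

Lemma bip_edge e : e \in edges (bip_rel b) ->
  exists i j, b i j /\ e = [set inl i; inr j].
Proof.
rewrite inE => /existsP [x /existsP [y /andP [hr /eqP ->]]].
case: x hr => [i|j]; case: y => [i'|j'] //= hr.
  by exists i, j'.
by exists i', j; split=> //; rewrite setUC.
Qed.

Lemma edge_bip i j : b i j -> [set inl i; inr j] \in edges (bip_rel b).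
Proof. by move=> h; rewrite inE; apply/existsP; exists (inl i); apply/existsP; exists (inr j); rewrite /= h eqxx. Qed.

Definition E0 i j : {set V2} := [set inl (inl i); inl (inr j)].
Definition E1 i j : {set V2} := [set inl (inl i); inr (inr j)].
Definition E2 i j : {set V2} := [set inr (inl i); inl (inr j)].

Lemma S2_edge e : e \in edges (S2_rel b h1 h2) ->
  exists i j, b i j /\ (e = E0 i j \/ (h1 i j /\ e = E1 i j) \/ (h2 i j /\ e = E2 i j)).
Proof.
have H1 i j : h1 i j -> b i j by move=> h; rewrite (proj1 (dec i j)) h.
have H2 i j : h2 i j -> b i j by move=> h; rewrite (proj1 (dec i j)) h orbT.
rewrite inE => /existsP [x /existsP [y /andP [hr /eqP ->]]].
case: x hr => [[i|j]|[i|j]]; case: y => [[i'|j']|[i'|j']] //= hr.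
- by exists i, j'; split; [|left].
- by exists i, j'; split; [auto|right; left].
- by exists i', j; split; [|left; rewrite /E0 setUC].
- by exists i', j; split; [auto|right; right; rewrite /E2 setUC].
- by exists i, j'; split; [auto|right; right].
- by exists i', j; split; [auto|right; left; rewrite /E1 setUC].
Qed.

Lemma E0_in i j : b i j -> E0 i j \in edges (S2_rel b h1 h2).
Proof. by move=> h; rewrite inE; apply/existsP; exists (inl (inl i)); apply/existsP; exists (inl (inr j)); rewrite /= h eqxx. Qed.
Lemma E1_in i j : h1 i j -> E1 i j \in edges (S2_rel b h1 h2).
Proof. by move=> h; rewrite inE; apply/existsP; exists (inl (inl i)); apply/existsP; exists (inr (inr j)); rewrite /= h eqxx. Qed.
Lemma E2_in i j : h2 i j -> E2 i j \in edges (S2_rel b h1 h2).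
Proof. by move=> h; rewrite inE; apply/existsP; exists (inr (inl i)); apply/existsP; exists (inl (inr j)); rewrite /= h eqxx. Qed.

Lemma pair_inj i j i' j' : [set inl i; inr j] = [set inl i'; inr j'] :> {set V} -> i = i' /\ j = j'.
Proof.
move/setP => H; split.
  have : inl i \in [set inl i'; inr j'] by rewrite -H !inE eqxx.
  by rewrite !inE => /orP [/eqP [] | /eqP []].
have : inr j \in [set inl i'; inr j'] by rewrite -H !inE eqxx orbT.
by rewrite !inE => /orP [/eqP [] | /eqP []].
Qed.


Lemma main_lab f g : edge_magic_labeling (bip_rel b) f g ->
  edge_magic_labeling (S2_rel b h1 h2) (FF f) (GG g).
Proof.
case => [[fI [gI dj]] fb gb su [c mc]].
move: fb gb su; set N := (X in forall v, _ <= _ <= X) => fb gb su.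
have gE i j : b i j -> 1 <= g [set inl i; inr j] <= N.
  by move=> h; apply: gb; apply: edge_bip.
have GE0 i j : GG g (E0 i j) = 2 * g [set inl i; inr j] - 1 by rewrite /E0 GG2.
have GE1 i j : GG g (E1 i j) = 2 * g [set inl i; inr j] by rewrite /E1 GG2.
have GE2 i j : GG g (E2 i j) = 2 * g [set inl i; inr j] by rewrite /E2 GG2.
have key i j i' j' : b i j -> b i' j' ->
    (2 * g [set inl i; inr j] - 1 = 2 * g [set inl i'; inr j'] - 1 \/
     2 * g [set inl i; inr j] = 2 * g [set inl i'; inr j']) -> i = i' /\ j = j'.
  move=> hb hb' E; have g1 := gE i j hb; have g2 := gE i' j' hb'.
  apply: pair_inj; apply: gI; try (apply: edge_bip => //).
  move: E g1 g2; set x := g [set inl i; inr j]; set y := g [set inl i'; inr j'].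
  lia.
suff : 2 * N = #|{: (V + V)%type}| + #|edges (S2_rel b h1 h2)| /\
  edge_magic_labeling (S2_rel b h1 h2) (FF f) (GG g) by case.
apply: gen_label.
- move=> u v; have := fb (unw u); have := fb (unw v).
  case: u => u; case: v => v /= h1' h2' E; rewrite /FF /= in E; try lia.
    by rewrite (fI u v) //; lia.
  by rewrite (fI u v) //; lia.
- move=> e1 e2 /S2_edge [i [j [hb H]]] /S2_edge [i' [j' [hb' H']]].
  have := gE i j hb; have := gE i' j' hb';
  case: H => [->|[[hh ->]|[hh ->]]]; case: H' => [->|[[hh' ->]|[hh' ->]]];
    rewrite ?GE0 ?GE1 ?GE2 => g1 g2 E;
    move: g1 g2 E; set x := g [set inl i; inr j]; set y := g [set inl i'; inr j'] => g1 g2 E;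
    try lia.
  all: have [? ?] : i = i' /\ j = j' by apply: key => //; first [by left; exact: E | by right; exact: E].
  all: subst i j => //.
  + by exfalso; move: (dec i' j') => [_]; rewrite hh hh'.
  + by exfalso; move: (dec i' j') => [_]; rewrite hh hh'.
- move=> v e /S2_edge [i [j [hb H]]] E.
  have := gE i j hb; have := fb (unw v); have := dj (unw v) _ (edge_bip _ _ hb).
  case: H E => [->|[[_ ->]|[_ ->]]]; rewrite ?GE0 ?GE1 ?GE2 /FF;
    set x := g [set inl i; inr j]; case: (isl v); lia.
- by move=> v; have := fb (unw v); rewrite /FF; case: (isl v); lia.
- move=> e /S2_edge [i [j [hb H]]]; have := gE i j hb.
  by case: H => [->|[[_ ->]|[_ ->]]]; rewrite ?GE0 ?GE1 ?GE2;
    set x := g [set inl i; inr j]; lia.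
- move=> k hk.
  have [l [hl hkl]] : exists l, 1 <= l <= N /\ (k = 2 * l \/ k = 2 * l - 1).
    exists ((k + 1) %/ 2); lia.
  case: (su l hl) => [[v fv]|[e he ge]].
    case: hkl => ->; left.
      by exists (inl v); rewrite /FF /= fv.
    by exists (inr v); rewrite /FF /= fv.
  case: (bip_edge _ he) => i [j [hb ee]]; subst e.
  case: hkl => ->; right.
    have := proj1 (dec i j); rewrite hb => /esym /orP [hh|hh].
      by exists (E1 i j); [apply: E1_in | rewrite GE1 ge].
    by exists (E2 i j); [apply: E2_in | rewrite GE2 ge].
  by exists (E0 i j); [apply: E0_in | rewrite GE0 ge].
- exists (2 * c - 1) => x y hr; case: (S2_bip _ _ hr) => hb hl.
  have he : [set unw x; unw y] \in edges (bip_rel b).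
    by rewrite inE; apply/existsP; exists (unw x); apply/existsP; exists (unw y); rewrite hb eqxx.
  have := mc _ _ hb; have := fb (unw x); have := fb (unw y); have := gb _ he.
  rewrite /FF GG2; move: hl; case: (isl x); case: (isl y) => //= *; lia.
Qed.

End S2.

Theorem mainTheorem7 (s t : nat) (b h1 h2 : 'I_s -> 'I_t -> bool) :
  decomposition b h1 h2 ->
  (edge_magic (bip_rel b) -> edge_magic (S2_rel b h1 h2)) /\
  (super_edge_magic (bip_rel b) -> super_edge_magic (S2_rel b h1 h2)).
Proof.
move=> dec; split.
  by case=> f [g lab]; exists (@FF s t f), (@GG s t g); apply: main_lab.
case=> f [g [lab fb su]]; exists (@FF s t f), (@GG s t g); split.
- exact: main_lab.
- move=> v; rewrite card_sum; have := fb (@unw s t v); rewrite /FF; case: (@isl s t v); lia.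
- move=> k; rewrite card_sum => hk.
  move: hk su; set P := #|_| => hk su.
  have [l [hl hkl]] : exists l, 1 <= l <= P /\ (k = 2 * l \/ k = 2 * l - 1).
    exists ((k + 1) %/ 2); lia.
  case: (su l hl) => v fv.
  case: hkl => ->.
    by exists (inl v); rewrite /FF /= fv.
  by exists (inr v); rewrite /FF /= fv.
Qed.
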